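(* Let $A$ be a row-finite $\omega\times\omega$ complex matrix, $g\in\mathbb{C}^{\omega}$, and let $Q$ be a nonsingular row-finite matrix such that $H=QA=(h_{ij})$ is in quasi-Hermite form. Let $W$ be the set of indices of zero rows of $H$, $J=\{j_0<j_1<\cdots\}=\omega\setminus W$ the indices of nonzero rows, $\mu_i=\ell(H_{j_i})$, and $\mathbf{k}=Qg$. Then: (a) the system $Ay=g$ (with unknown $y\in\mathbb{C}^\omega$) has a solution if and only if $\mathbf{k}_w=0$ for all $w\in W$; (b) in that case, $y\in\mathbb{C}^{\omega}$ solves $Ay=g$ if and only if for every $i$ with $j_i\in J$, $$y_{\mu_i}=\mathbf{k}_{j_i}-\sum_{k=0}^{\mu_i-1}h_{j_ik}y_k,$$ where the coordinates $y_s$, $s\in\omega\setminus\{\mu_0,\mu_1,\dots\}$, are arbitrary (and only these occur with possibly nonzero coefficients in the sums). In particular the homogeneous system $Ay=0$ has a nontrivial solution if and only if $\operatorname{def}(A)>0$.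
   Context: $\omega=\{0,1,2,\dots\}$; $\mathbb{C}^{\omega}$ is the space of all complex sequences (written as columns); for a row-finite matrix $A$, $(Ay)_n=\sum_k a_{nk}y_k$ (a finite sum). Row-finite: each row has finitely many nonzero entries; nonsingular: invertible in the algebra of row-finite matrices. Length $\ell(x)$ of a finitely supported sequence $x\neq 0$ is its largest index with nonzero coordinate. Quasi-Hermite form (QHF): with $J$ the indices of nonzero rows and $\ell_j=\ell(H_j)$, (i) $j<j'$ in $J$ implies $\ell_j<\ell_{j'}$; (ii) $h_{j\ell_j}=1$; (iii) $h_{m\ell_j}=0$ for all $m\neq j$. $\operatorname{def}(A)$ is the codimension of the row space of $A$ in the space of finitely supported sequences. *)

(* Defs.v *)
From HB Require Import structures.
From mathcomp Require Import all_boot all_order all_algebra.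
Set Implicit Arguments. Unset Strict Implicit. Unset Printing Implicit Defensive.
Import GRing.Theory.
Local Open Scope ring_scope.

Record rfmat (F : fieldType) := RFMat {
  rfm :> nat -> nat -> F;
  rfb : nat -> nat;
  rfbP : forall i k, (rfb i <= k)%N -> rfm i k = 0 }.

Definition mulv (F : fieldType) (A : rfmat F) (y : nat -> F) : nat -> F :=
  fun n => \sum_(k < rfb A n) A n k * y k.

Definition mulm (F : fieldType) (A : rfmat F) (B : nat -> nat -> F)
  : nat -> nat -> F :=
  fun i j => \sum_(k < rfb A i) A i k * B k j.

Definition idm (F : fieldType) : nat -> nat -> F := fun i j => (i == j)%:R.

Definition nonsingular (F : fieldType) (Q : rfmat F) : Prop :=
  exists P : rfmat F,
    (forall i j, mulm P Q i j = idm F i j) /\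
    (forall i j, mulm Q P i j = idm F i j).

Definition zero_row (F : fieldType) (x : nat -> F) : Prop := forall k, x k = 0.

Definition is_len (F : fieldType) (x : nat -> F) (l : nat) : Prop :=
  x l != 0 /\ forall k, (l < k)%N -> x k = 0.

Definition QHF (F : fieldType) (H : nat -> nat -> F) : Prop :=
  forall j l, is_len (H j) l ->
    [/\ H j l = 1,
        (forall m, m <> j -> H m l = 0) &
        (forall j' l', (j < j')%N -> is_len (H j') l' -> (l < l')%N)].

Definition fin_supp (F : fieldType) (x : nat -> F) : Prop :=
  exists N, forall k, (N <= k)%N -> x k = 0.

Definition in_rowspace (F : fieldType) (A : nat -> nat -> F) (x : nat -> F)
  : Prop :=
  exists (N : nat) (c : nat -> F), forall k, x k = \sum_(i < N) c i * A i k.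

(* def(A) > 0 : the row space of A has positive codimension in the space
   of finitely supported sequences, i.e. it is a proper subspace. *)
Definition def_pos (F : fieldType) (A : nat -> nat -> F) : Prop :=
  exists x : nat -> F, fin_supp x /\ ~ in_rowspace A x.

(* Main.v *)
From Stdlib Require Import ClassicalEpsilon Classical.
Require Import Defs.
From HB Require Import structures.
From mathcomp Require Import all_boot all_order all_algebra.
Import GRing.Theory.
Local Open Scope ring_scope.
Set Implicit Arguments. Unset Strict Implicit.

Lemma sum_ext_bound (F : fieldType) (f : nat -> F) b M :
  (forall k, (b <= k)%N -> f k = 0) -> (b <= M)%N ->
  \sum_(k < b) f k = \sum_(k < M) f k.
Proof.
move=> hf hbM.
rewrite -!(big_mkord xpredT) (big_cat_nat (leq0n b) hbM) /=.
rewrite [X in _ = _ + X]big1_seq ?addr0 // => k /=.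
by rewrite mem_index_iota => /andP[hk _]; rewrite hf.
Qed.

Lemma sum_ext_bound2 (F : fieldType) (f : nat -> F) b M1 M2 :
  (forall k, (b <= k)%N -> f k = 0) -> (b <= M1)%N -> (b <= M2)%N ->
  \sum_(k < M1) f k = \sum_(k < M2) f k.
Proof.
move=> hf h1 h2; by rewrite -(sum_ext_bound hf h1) (sum_ext_bound hf h2).
Qed.

Definition bnd (F : fieldType) (X Y : rfmat F) i := (\max_(l < rfb X i) rfb Y l)%N.

Lemma bnd_ge (F : fieldType) (X Y : rfmat F) i l :
  (l < rfb X i)%N -> (rfb Y l <= bnd X Y i)%N.
Proof. by move=> hl; rewrite /bnd; apply: (@leq_bigmax _ (fun l : (ordinal (rfb X i)) => rfb Y l) (Ordinal hl)). Qed.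

Lemma mulm0 (F : fieldType) (X Y : rfmat F) i k :
  (bnd X Y i <= k)%N -> mulm X Y i k = 0.
Proof.
move=> hk; rewrite /mulm big1 // => l _.
rewrite (rfbP (r := Y)) ?mulr0 //.
by apply: leq_trans (bnd_ge Y (ltn_ord l)) hk.
Qed.

Lemma mulv_assoc (F : fieldType) (X Y : rfmat F) (v : nat -> F) i M :
  (bnd X Y i <= M)%N ->
  mulv X (mulv Y v) i = \sum_(k < M) mulm X Y i k * v k.
Proof.
move=> hM; rewrite /mulv /mulm.
transitivity (\sum_(l < rfb X i) \sum_(k < M) X i l * (Y l k * v k)).
  apply: eq_bigr => l _; rewrite mulr_sumr.
  apply: (@sum_ext_bound _ (fun k => X i l * (Y l k * v k)) (rfb Y l) M).
    by move=> k hk; rewrite (rfbP (r := Y)) // mul0r mulr0.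
  exact: leq_trans (bnd_ge Y (ltn_ord l)) hM.
rewrite exchange_big /=; apply: eq_bigr => k _.
by rewrite mulr_suml; apply: eq_bigr => l _; rewrite mulrA.
Qed.

Lemma mulv_ext (F : fieldType) (X : rfmat F) u v i :
  (forall k, u k = v k) -> mulv X u i = mulv X v i.
Proof. by move=> h; apply: eq_bigr => k _; rewrite h. Qed.

Lemma delta_sum (F : fieldType) (y : nat -> F) s M : (s < M)%N ->
  \sum_(k < M) idm F s k * y k = y s.
Proof.
move=> hs.
rewrite -(@sum_ext_bound _ (fun k => idm F s k * y k) s.+1 M) //.
  rewrite big_ord_recr /= big1 ?add0r; first by rewrite /idm eqxx mul1r.
  by move=> k _; rewrite /idm (gtn_eqF (ltn_ord k)) mul0r.
by move=> k hk; rewrite /idm (ltn_eqF hk) mul0r.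
Qed.

Lemma row_cases (F : fieldType) (x : nat -> F) b :
  (forall k, (b <= k)%N -> x k = 0) -> zero_row x \/ exists l, is_len x l.
Proof.
elim: b => [|b IH] hb; first by left => k; apply: hb.
case: (eqVneq (x b) 0) => hxb.
  apply: IH => k; rewrite leq_eqVlt => /orP[/eqP <-|hk] //; exact: hb.
by right; exists b; split => // k hk; apply: hb.
Qed.

Lemma rs_ext (F : fieldType) (X : nat -> nat -> F) u v :
  (forall k, u k = v k) -> in_rowspace X v -> in_rowspace X u.
Proof. by move=> h [N [c hc]]; exists N, c => k; rewrite h hc. Qed.

Lemma rs0 (F : fieldType) (X : nat -> nat -> F) : in_rowspace X (fun _ => 0).
Proof. by exists 0%N, (fun _ => 0) => k; rewrite big_ord0. Qed.

Lemma rs_comb (F : fieldType) (X : nat -> nat -> F) u v a :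
  in_rowspace X u -> in_rowspace X v -> in_rowspace X (fun k => u k + a * v k).
Proof.
move=> [N1 [c1 h1]] [N2 [c2 h2]].
have ext : forall (N : nat) (c : nat -> F) M k, (N <= M)%N ->
    \sum_(i < N) c i * X i k = \sum_(i < M) (if (i < N)%N then c i else 0) * X i k.
  move=> N c M k hNM.
  rewrite -(@sum_ext_bound _ (fun i => (if (i < N)%N then c i else 0) * X i k) N M) //.
    by apply: eq_bigr => i _; rewrite ltn_ord.
  by move=> i hi; rewrite ltnNge hi mul0r.
exists (maxn N1 N2), (fun i => (if (i < N1)%N then c1 i else 0) +
   a * (if (i < N2)%N then c2 i else 0)) => k.
rewrite h1 h2 (ext N1 c1 (maxn N1 N2) k (leq_maxl _ _))
  (ext N2 c2 (maxn N1 N2) k (leq_maxr _ _)) mulr_sumr -big_split /=.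
by apply: eq_bigr => i _; rewrite mulrDl mulrA.
Qed.


Section Main.
Variables (F : fieldType) (A Q P : rfmat F).
Hypothesis hPQ : forall i j, mulm P Q i j = idm F i j.
Hypothesis hQ : QHF (mulm Q A).
Local Notation H := (mulm Q A).

Lemma Hy i M y : (forall k, (M <= k)%N -> H i k = 0) ->
  mulv Q (mulv A y) i = \sum_(k < M) H i k * y k.
Proof.
move=> hM; rewrite (mulv_assoc y (leq_maxl (bnd Q A i) M)).
symmetry; apply: (@sum_ext_bound _ (fun k => H i k * y k)) => [k hk|].
  by rewrite hM // mul0r.
exact: leq_maxr.
Qed.

Lemma PQ_cancel v i : mulv P (mulv Q v) i = v i.
Proof.
rewrite (mulv_assoc v (leq_maxl (bnd P Q i) i.+1)).
under eq_bigr do rewrite hPQ.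
by apply: delta_sum; rewrite leq_maxr.
Qed.

Lemma solve_iff g y : (forall n, mulv A y n = g n) <->
  (forall i, mulv Q (mulv A y) i = mulv Q g i).
Proof.
split; first by move=> h i; apply: mulv_ext.
move=> h n; rewrite -(PQ_cancel (mulv A y) n) -(PQ_cancel g n).
by apply: mulv_ext => k; exact: h.
Qed.

Lemma Hzero y i : zero_row (H i) -> mulv Q (mulv A y) i = 0.
Proof. by move=> hz; rewrite (@Hy i 0) ?big_ord0 // => k _; apply: hz. Qed.

Lemma Hcases i : zero_row (H i) \/ exists l, is_len (H i) l.
Proof. apply: (row_cases (b := bnd Q A i)) => k; exact: mulm0. Qed.

Lemma piv_uniq j j' s : is_len (H j) s -> is_len (H j') s -> j = j'.
Proof.
move=> hj hj'; case: (eqVneq j j') => // ne.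
case: (hQ hj) => _ h2 _; case: hj' => nz _.
by rewrite h2 ?eqxx // in nz => e; rewrite e eqxx in ne.
Qed.

Lemma row_eq y kv i mu : is_len (H i) mu ->
  (mulv Q (mulv A y) i = kv <-> y mu = kv - \sum_(k < mu) H i k * y k).
Proof.
move=> hl; have [h1 _ _] := hQ hl.
have hl' := hl; case: hl' => _ hz.
rewrite (@Hy i mu.+1 y) => [|k hk]; last by apply: hz.
rewrite big_ord_recr /= h1 mul1r; split.
  by move=> <-; rewrite addrC addrK.
by move=> ->; rewrite addrC subrK.
Qed.

Definition pick (s : nat) : option nat :=
  match excluded_middle_informative (exists j, is_len (H j) s) with
  | left h => Some (proj1_sig (constructive_indefinite_description _ h))
  | right _ => None end.

Lemma pickP s : match pick s with Some j => is_len (H j) s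
  | None => forall j, ~ is_len (H j) s end.
Proof.
rewrite /pick; case: excluded_middle_informative => [h|h].
  by case: constructive_indefinite_description.
by move=> j hj; apply: h; exists j.
Qed.

Section Constr.
Variables kk z : nat -> F.

Fixpoint Yf (n : nat) : nat -> F :=
  match n with
  | 0 => z
  | n'.+1 => fun s => if s == n' then
      (match pick n' with Some j => kk j - \sum_(k < n') H j k * Yf n' k
       | None => z n' end) else Yf n' s
  end.

Definition ysol s := Yf s.+1 s.

Lemma Yf_stable n k : (k < n)%N -> Yf n k = ysol k.
Proof.
elim: n => // n IH hk /=.
case: eqP => [->|/eqP ne]; first by rewrite /ysol /= eqxx.
by apply: IH; rewrite ltn_neqAle ne -ltnS.
Qed.

Lemma ysol_eq s : ysol s = match pick s with
  Some j => kk j - \sum_(k < s) H j k * ysol k | None => z s end.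
Proof.
rewrite {1}/ysol /= eqxx; case: pick => // j; congr (_ - _).
by apply: eq_bigr => k _; rewrite Yf_stable.
Qed.

Lemma ysol_piv j mu : is_len (H j) mu ->
  ysol mu = kk j - \sum_(k < mu) H j k * ysol k.
Proof.
move=> hj; rewrite ysol_eq; have := pickP mu.
case: pick => [j' hj'|hn]; first by rewrite (piv_uniq hj hj').
by case: (hn j).
Qed.

Lemma ysol_free s : (forall j, ~ is_len (H j) s) -> ysol s = z s.
Proof.
move=> hn; rewrite ysol_eq; have := pickP s.
by case: pick => // j' hj'; case: (hn j').
Qed.

Lemma ysol_sol : (forall w, zero_row (H w) -> kk w = 0) ->
  forall i, mulv Q (mulv A ysol) i = kk i.
Proof.
move=> hz i; case: (Hcases i) => [h0|[l hl]].
  by rewrite Hzero // hz.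
by apply/(row_eq _ _ hl); apply: ysol_piv.
Qed.
End Constr.

Lemma rsH j : in_rowspace A (H j).
Proof. by exists (rfb Q j), (Q j). Qed.

Lemma rs_all : (forall s, exists j, is_len (H j) s) ->
  forall N x, (forall k, (N <= k)%N -> x k = 0) -> in_rowspace A x.
Proof.
move=> hp; elim=> [|N IH] x hx.
  by apply: (rs_ext (v := fun _ => 0)) (rs0 _) => k; apply: hx.
have [j hj] := hp N; have [h1 _ _] := hQ hj; case: hj => _ hz.
apply: (rs_ext (v := fun k => (x k - x N * H j k) + x N * H j k)).
  by move=> k; rewrite subrK.
apply: rs_comb (rsH j); apply: IH => k.
rewrite leq_eqVlt => /orP[/eqP <-|hk]; first by rewrite h1 mulr1 subrr.
by rewrite hx // hz // mulr0 subrr.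
Qed.

Lemma main_sec g :
  let kk := mulv Q g in
  ((exists y, forall n, mulv A y n = g n) <->
     (forall w, zero_row (H w) -> kk w = 0)) /\
  ((exists y, forall n, mulv A y n = g n) ->
     (forall y, (forall n, mulv A y n = g n) <->
        (forall j mu, is_len (H j) mu ->
           y mu = kk j - \sum_(k < mu) H j k * y k)) /\
     (forall z : nat -> F, exists y,
        (forall n, mulv A y n = g n) /\
        (forall s, (forall j, ~ is_len (H j) s) -> y s = z s)) /\
     (forall j mu j' mu', is_len (H j) mu -> is_len (H j') mu' -> j <> j' ->
        H j mu' = 0)) /\
  ((exists y, (exists s, y s != 0) /\ forall n, mulv A y n = 0) <->
     def_pos A).
Proof.
move=> kk.
have fwd : (exists y, forall n, mulv A y n = g n) ->
     (forall w, zero_row (H w) -> kk w = 0).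
  move=> [y hy] w hw; have := (solve_iff g y).1 hy w.
  by rewrite Hzero.
split; first split => //.
  move=> hz; exists (ysol kk (fun _ => 0)); apply/solve_iff.
  exact: ysol_sol.
split.
  move=> hex; have hz := fwd hex; split; [|split].
  - move=> y; split.
      move=> hy j mu hl; apply/(row_eq y (kk j) hl).
      exact: (solve_iff g y).1 hy j.
    move=> hp; apply/solve_iff => i; case: (Hcases i) => [h0|[l hl]].
      by rewrite Hzero //; symmetry; apply: hz.
    by apply/(row_eq _ _ hl); apply: hp.
  - move=> z; exists (ysol kk z); split.
      by apply/solve_iff; apply: ysol_sol.
    exact: ysol_free.
  - move=> j mu j' mu' hl hl' ne; case: (hQ hl') => _ h2 _.
    exact: h2.
split.
  move=> [y [[s hs] hy]]; exists (idm F s); split.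
    by exists s.+1 => k hk; rewrite /idm (ltn_eqF hk).
  move=> [N [c hc]]; move/eqP: hs; apply.
  pose M := maxn s.+1 (\max_(i < N) rfb A i).
  rewrite -(@delta_sum _ y s M) ?leq_maxl //.
  under eq_bigr do rewrite hc mulr_suml.
  rewrite exchange_big /= big1 // => i _.
  rewrite -(@sum_ext_bound _ (fun k => c i * A i k * y k) (rfb A i)).
  - rewrite (eq_bigr (fun k : 'I__ => c i * (A i k * y k))) => [|k _]; last by rewrite mulrA.
    by rewrite -mulr_sumr; change (c i * mulv A y i = 0); rewrite hy mulr0.
  - by move=> k hk; rewrite (rfbP (r := A)) // mulr0 mul0r.
  apply: leq_trans (leq_maxr _ _).
  exact: (@leq_bigmax _ (fun i : 'I_N => rfb A i) i).
move=> [x [[N hN] hx]]; apply: NNPP => hno; apply: hx.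
apply: (rs_all _ hN) => s; apply: NNPP => hns; apply: hno.
exists (ysol (mulv Q (fun _ => 0)) (idm F s)); split.
  exists s; rewrite ysol_free; first by rewrite /idm eqxx oner_neq0.
  by move=> j hj; apply: hns; exists j.
apply/(solve_iff (fun _ => 0)); apply: ysol_sol => w _.
by apply: big1 => k _; rewrite mulr0.
Qed.

End Main.

Theorem mainTheorem4 (F : fieldType) (A Q : rfmat F) (g : nat -> F) :
  nonsingular Q -> QHF (mulm Q A) ->
  let H := mulm Q A in
  let kk := mulv Q g in
  (* (a) solvability criterion *)
  ((exists y, forall n, mulv A y n = g n) <->
     (forall w, zero_row (H w) -> kk w = 0)) /\
  (* (b) description of all solutions *)
  ((exists y, forall n, mulv A y n = g n) ->
     (forall y, (forall n, mulv A y n = g n) <->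
        (forall j mu, is_len (H j) mu ->
           y mu = kk j - \sum_(k < mu) H j k * y k)) /\
     (* the non-pivot coordinates are arbitrary: *)
     (forall z : nat -> F, exists y,
        (forall n, mulv A y n = g n) /\
        (forall s, (forall j, ~ is_len (H j) s) -> y s = z s)) /\
     (* only non-pivot coordinates occur with nonzero coefficients *)
     (forall j mu j' mu', is_len (H j) mu -> is_len (H j') mu' -> j <> j' ->
        H j mu' = 0)) /\
  (* homogeneous case *)
  ((exists y, (exists s, y s != 0) /\ forall n, mulv A y n = 0) <->
     def_pos A).
Proof.
move=> [P [hPQ _]] hQ.
exact: (main_sec hPQ hQ g).
Qed.
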